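(* Let $p$ be an odd prime, let $v$ be an integer with $1<v<p-1$, let $g\in\{2,\dots,p-1\}$ be a primitive root modulo $p$, let $t\ge1$ and $b\in\{0,\dots,v-1\}$. Let $$\rho(b,t)=\#\{i\in[1,p-1]:\ g^i\,\%\,p\not\equiv b,\ g^{i+t+1}\,\%\,p\not\equiv b,\ g^{i+j}\,\%\,p\equiv b\ (1\le j\le t)\},$$ all congruences modulo $v$. Write $p=q\,g^{t+1}+r$ with $0\le r<g^{t+1}$. Then $$(v-1)\left\lfloor\frac{g}{v}\right\rfloor^{t}\left\lfloor\frac{(v-1)g}{v}\right\rfloor\left\lfloor\frac{q}{v}\right\rfloor\ \le\ \rho(b,t)\ \le\ (v-1)\left\lceil\frac{g}{v}\right\rceil^{t}\left\lceil\frac{(v-1)g}{v}\right\rceil\left\lceil\frac{q+1}{v}\right\rceil.$$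
   Context: $x\,\%\,p$ denotes the least nonnegative remainder of the integer $x$ modulo $p$. *)

(* Defs.v *)
From mathcomp Require Import all_boot.

Definition is_prim_root (p g : nat) : Prop :=
  g ^ p.-1 %% p = 1 %% p /\ (forall k, 0 < k < p.-1 -> g ^ k %% p != 1 %% p).

Definition rho (p v g b t : nat) : nat :=
  #|[set i : 'I_p | (0 < i)
      && ((g ^ i %% p) %% v != b)
      && ((g ^ (i + t.+1) %% p) %% v != b)
      && [forall j : 'I_t.+1, (0 < j) ==> ((g ^ (i + j) %% p) %% v == b)]]|.

Definition ceildiv (a d : nat) : nat := (a + d.-1) %/ d.

(* Main.v *)
Require Import Defs.
From mathcomp Require Import all_boot zify ring.

Lemma mod_cancel (u v c c' : nat) : coprime v u ->
  (u * c == u * c' %[mod v]) = (c == c' %[mod v]).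
Proof.
move=> cop.
wlog le: c c' / c' <= c.
  move=> W; case: (leqP c' c) => h; first exact: W.
  by rewrite eq_sym W ?(ltnW h) // eq_sym.
rewrite !eqn_mod_dvd ?leq_mul2l ?le ?orbT // -mulnBr.
by rewrite Gauss_dvdr.
Qed.

Lemma win (v M a : nat) : 0 < v -> a < v ->
  \sum_(M <= x < M + v) (x %% v == a : nat) = 1.
Proof.
move=> v0 av; elim: M => [|M IH].
  rewrite add0n (big_cat_nat _ (n := a)) ?(ltnW av) //=.
  rewrite [X in _ + X = _]big_ltn //= modn_small // eqxx.
  rewrite big1_seq; last first.
    move=> i /andP [_]; rewrite mem_index_iota => /andP [_ h].
    by rewrite modn_small ?(ltn_trans h) // ltn_eqF.
  rewrite big1_seq // => i /andP [_]; rewrite mem_index_iota => /andP [h1 h2].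
  by rewrite modn_small // gtn_eqF.
set f := fun x => (x %% v == a : nat).
have e1 : \sum_(M <= x < (M + v).+1) f x = \sum_(M <= x < M + v) f x + f (M + v).
  by rewrite big_nat_recr // leq_addr.
have e2 : \sum_(M <= x < (M + v).+1) f x = f M + \sum_(M.+1 <= x < M.+1 + v) f x.
  by rewrite big_ltn ?ltnS ?leq_addr // addSn.
have e3 : f (M + v) = f M by rewrite /f modnDr.
rewrite e2 e3 in e1. rewrite /f in e1 *. rewrite IH in e1. lia.
Qed.

Lemma sub_window (f : nat -> nat) L n : \sum_(L <= x < L + n) f x <= \sum_(L <= x < L + n.+1) f x.
Proof. by rewrite addnS big_nat_recr ?leq_addr //= leq_addr. Qed.

Lemma sum_mono_len (f : nat -> nat) L k m : k <= m ->
  \sum_(L <= x < L + k) f x <= \sum_(L <= x < L + m) f x.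
Proof.
move=> km; rewrite [X in _ <= X](big_cat_nat _ (n := L + k)) ?leq_add2l ?leq_addr //.

Qed.

Lemma interval (v L n a : nat) : 0 < v -> a < v ->
  n %/ v <= \sum_(L <= x < L + n) (x %% v == a : nat) <= (n + v.-1) %/ v.
Proof.
move=> v0 av; elim/ltn_ind: n L => n IH L.
case: (ltnP n v) => nv.
  rewrite divn_small // leq0n /=.
  case: n nv IH => [|n] nv IH; first by rewrite addn0 big_geq.
  have c1 : 1 <= (n.+1 + v.-1) %/ v by rewrite leq_divRL // mul1n; lia.
  apply: leq_trans c1.
  rewrite -(@win v L a v0 av); apply: sum_mono_len; exact: ltnW.
have e: L + n = (L + v) + (n - v) by lia.
rewrite e (big_cat_nat _ (n := L + v)) ?leq_addr //= win //.
have [h1 h2] := andP (IH (n - v) ltac:(lia) (L + v)).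
have d1 : n %/ v = (n - v) %/ v + 1.
  by rewrite {1}(_ : n = n - v + 1 * v) ?divnDMl //; lia.
have d2 : (n + v.-1) %/ v = (n - v + v.-1) %/ v + 1.
  by rewrite (_ : n + v.-1 = n - v + v.-1 + 1 * v) ?divnDMl //; lia.
rewrite d1 d2; lia.
Qed.

Lemma aff_res (v p b w : nat) : 0 < v -> coprime v p ->
  exists2 r, r < v & forall c, (w == b + p * c %[mod v]) = (c %% v == r).
Proof.
move=> v0 cop.
pose h (c : 'I_v) : 'I_v := Ordinal (ltn_pmod (b + p * c) v0).
have hinj : injective h.
  move=> c c' /(congr1 val) /= /eqP; rewrite eqn_modDl mod_cancel //.
  by rewrite !modn_small // => /eqP /val_inj.
have [hi _ hK] := injF_bij hinj.
pose r := hi (Ordinal (ltn_pmod w v0)).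
exists (val r); first exact: ltn_ord.
have hr : (b + p * r) %% v = w %% v.
  by have := congr1 val (hK (Ordinal (ltn_pmod w v0))).
move=> c; rewrite -hr eq_sym eqn_modDl mod_cancel //.
by rewrite (modn_small (ltn_ord r)) eq_sym.
Qed.

Lemma aff_count (v p b w g : nat) : 0 < v -> coprime v p ->
  g %/ v <= \sum_(0 <= c < g) (w == b + p * c %[mod v] : nat) <= (g + v.-1) %/ v.
Proof.
move=> v0 cop; have [r rv hr] := @aff_res v p b w v0 cop.
rewrite (eq_bigr (fun c => (c %% v == r : nat))); last by move=> c _; rewrite hr.
have := @interval v 0 g r v0 rv; by rewrite add0n.
Qed.

Lemma sum_shift (F : nat -> nat) k n :
  \sum_(k <= C < k + n) F C = \sum_(0 <= j < n) F (k + j).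
Proof.
rewrite -{1}(add0n k) big_addn (addnC k) addnK.
by apply: eq_bigr => j _; rewrite addnC.
Qed.

Lemma sum_split (F : nat -> nat) m n :
  \sum_(0 <= C < m * n) F C = \sum_(0 <= i < m) \sum_(0 <= j < n) F (i * n + j).
Proof.
elim: m => [|m IH]; first by rewrite mul0n !big_geq.
rewrite big_nat_recr //= -IH mulSnr (big_cat_nat _ (n := m * n)) ?leq_addr //=.
by rewrite sum_shift.
Qed.

Definition ch (p v g b n a C : nat) : bool :=
  all (fun j => a * g ^ j == b + p * (C %/ g ^ (n - j)) %[mod v]) (iota 1 n).

Lemma ch_rec p v g b n a C c : 0 < g -> c < g ->
  ch p v g b n.+1 a (C * g + c) =
  ch p v g b n a C && (a * g ^ n.+1 == b + p * (C * g + c) %[mod v]).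
Proof.
move=> g0 cg; rewrite /ch; have -> : iota 1 n.+1 = iota 1 n ++ [:: n.+1] by have h := iotaD 1 n 1; rewrite addn1 add1n in h.
rewrite all_cat /= subnn (expn0 g) (divn1 (C * g + c)) andbT.
rewrite (@eq_in_all _ _ (fun j => a * g ^ j == b + p * (C %/ g ^ (n - j)) %[mod v])) //.
move=> j; rewrite mem_iota => /andP [j1 jn].
have e : n.+1 - j = (n - j).+1 by lia.
by rewrite e (expnS g (n - j)) divnMA divnMDl // (divn_small cg) addn0.
Qed.

Lemma ch_step p v g b n a C c : 0 < n -> ch p v g b n a C ->
  (a * g ^ n.+1 == b + p * (C * g + c) %[mod v]) = (g * b == b + p * c %[mod v]).
Proof.
move=> n0 /allP /(_ n); rewrite mem_iota n0 add1n ltnSn (subnn n) (expn0 g) (divn1 C).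
move=> /(_ isT) /eqP H.
rewrite (expnSr g n) mulnA -modnMml H modnMml.
have e1 : (b + p * C) * g = g * b + p * C * g by ring.
have e2 : b + p * (C * g + c) = b + p * c + p * C * g by ring.
by rewrite e1 e2 eqn_modDr.
Qed.

Definition E p v g b n a := \sum_(0 <= C < g ^ n) (ch p v g b n a C : nat).

Lemma E1 p v g b a : E p v g b 1 a = \sum_(0 <= c < g) (a * g == b + p * c %[mod v] : nat).
Proof.
rewrite /E (expn1 g); apply: eq_bigr => c _.
rewrite /ch /=. rewrite (expn0 g) (divn1 c) (expn1 g) andbT. done.
Qed.

Lemma div_dig C g c : 0 < g -> c < g -> (C * g + c) %/ g = C.
Proof. by move=> g0 cg; rewrite (divnMDl C c g0) (divn_small cg) addn0. Qed.

Lemma E_rec p v g b n a : 0 < g -> 0 < n ->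
  E p v g b n.+1 a = E p v g b n a * \sum_(0 <= c < g) (g * b == b + p * c %[mod v] : nat).
Proof.
move=> g0 n0; rewrite /E (expnSr g n) sum_split big_distrl /=.
apply: eq_big_nat => C _.
case h: (ch p v g b n a C); last first.
  rewrite mul0n; apply: big1_seq => c /andP [_]; rewrite mem_index_iota => /andP [_ cg].
  by rewrite (@ch_rec p v g b n a C c g0 cg) h.
rewrite mul1n; apply: eq_big_nat => c /andP [_ cg].
by rewrite (@ch_rec p v g b n a C c g0 cg) h /= (@ch_step p v g b n a C c n0 h).
Qed.

Definition Q p v g b t C a :=
  (a != b) && ch p v g b t a (C %/ g) && ~~ (a * g ^ t.+1 == b + p * C %[mod v]).

Lemma sumQ p v g b t a : 0 < g -> 0 < t ->
  \sum_(0 <= C < g ^ t.+1) (Q p v g b t C a : nat) =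
  (a != b) * E p v g b t a * \sum_(0 <= c < g) (~~ (g * b == b + p * c %[mod v]) : nat).
Proof.
move=> g0 t0; rewrite /E (expnSr g t) sum_split.
case ab: (a != b); last first.
  rewrite !mul0n; apply: big1 => C _; apply: big1 => c _.
  by rewrite /Q ab.
rewrite mul1n big_distrl /=; apply: eq_big_nat => C _.
case h: (ch p v g b t a C); last first.
  rewrite mul0n; apply: big1_seq => c /andP [_]; rewrite mem_index_iota => /andP [_ cg].
  by rewrite /Q ab (@div_dig C g c g0 cg) h.
rewrite mul1n; apply: eq_big_nat => c /andP [_ cg].
by rewrite /Q ab (@div_dig C g c g0 cg) h /= (@ch_step p v g b t a C c t0 h).
Qed.

Lemma leq_sum_nat m n (F G : nat -> nat) :
  (forall i, m <= i < n -> F i <= G i) -> \sum_(m <= i < n) F i <= \sum_(m <= i < n) G i.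
Proof.
move=> H; rewrite big_nat_cond [X in _ <= X]big_nat_cond.
by apply: leq_sum => i /andP [h _]; apply: H.
Qed.

Lemma sum_ge_window (f h : nat -> nat) lo hi n : lo <= hi -> hi <= n ->
  (forall x, lo <= x < hi -> h x <= f x) ->
  \sum_(lo <= x < hi) h x <= \sum_(0 <= x < n) f x.
Proof.
move=> lh hn H.
rewrite (big_cat_nat (n := hi) (leq0n hi) hn) /= (big_cat_nat (n := lo) (leq0n lo) lh) /=.
have := @leq_sum_nat lo hi h f H; lia.
Qed.

Lemma sum_le_window (f h : nat -> nat) lo hi n : lo <= hi ->
  (forall x, x < n -> f x <= ((lo <= x) && (x < hi)) * h x) ->
  \sum_(0 <= x < n) f x <= \sum_(lo <= x < hi) h x.
Proof.
move=> lh H.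
apply: (@leq_trans (\sum_(0 <= x < n) ((lo <= x) && (x < hi)) * h x)).
  by apply: leq_sum_nat => x /andP [_ xn]; apply: H.
apply: (@leq_trans (\sum_(0 <= x < n + hi) ((lo <= x) && (x < hi)) * h x)).
  by rewrite (big_cat_nat (n := n) (leq0n n) (leq_addr hi n)) /= leq_addr.
rewrite (big_cat_nat (n := hi) (leq0n hi) (leq_addl n hi)) /=.
rewrite (big_cat_nat (n := lo) (leq0n lo) lh) /=.
rewrite big1_seq; last first.
  by move=> x /andP [_]; rewrite mem_index_iota => /andP [_ xl]; rewrite leqNgt xl.
rewrite [X in _ + _ + X]big1_seq; last first.
  by move=> x /andP [_]; rewrite mem_index_iota => /andP [hx _]; rewrite ltnNge hx andbF.
rewrite add0n addn0; apply: leq_sum_nat => x /andP [lx xh].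
by rewrite lx xh mul1n.
Qed.

Lemma divC_eq x Gt p C : 0 < p ->
  (x * Gt %/ p == C) = (C * p <= x * Gt) && (x * Gt < C.+1 * p).
Proof.
move=> p0; have h1 : (x * Gt %/ p <= C) = (x * Gt < C.+1 * p) by rewrite -ltn_divLR.
by rewrite eqn_leq andbC h1 leq_divRL.
Qed.

Lemma cnt_bounds p q r Gt C a v : 0 < v -> a < v -> 0 < Gt -> 0 < p -> C < Gt ->
  p = q * Gt + r -> r < Gt ->
  q %/ v <= \sum_(0 <= x < p) ((x * Gt %/ p == C) && (x %% v == a) : nat) <= (q.+1 + v.-1) %/ v.
Proof.
move=> v0 av G0 p0 CG pE rG.
set L := (p * C + Gt.-1) %/ Gt.
have hL := divn_eq (p * C + Gt.-1) Gt.
have hr := ltn_pmod (p * C + Gt.-1) G0.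
rewrite -/L in hL.
move: ((p * C + Gt.-1) %% Gt) hL hr => rm hL hr.
have hL1 : p * C <= L * Gt by lia.
have hL2 : L * Gt < p * C + Gt by lia.
apply/andP; split.
  case: q pE => [|q] pE; first by rewrite div0n.
  have I := @interval v L q.+1 a v0 av; case/andP: I => I _.
  apply: leq_trans I _; apply: sum_ge_window.
  - exact: leq_addr.
  - have : (L + q) * Gt < p * Gt by nia.
    rewrite ltn_mul2r G0 /=; lia.
  move=> x /andP [Lx xL].
  rewrite divC_eq //.
  have h1 : L * Gt <= x * Gt by rewrite leq_mul2r Lx orbT.
  have h2 : x * Gt <= (L + q) * Gt by rewrite leq_mul2r -ltnS -addnS xL orbT.
  have -> : C * p <= x * Gt by lia.
  have -> : x * Gt < C.+1 * p by nia.
  done.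
have I := @interval v L q.+1 a v0 av; case/andP: I => _ I.
apply: leq_trans I; apply: sum_le_window; first exact: leq_addr.
move=> x xp; case e: (x * Gt %/ p == C) => //=.
move: e; rewrite divC_eq // => /andP [h1 h2].
have h3 : L < x.+1.
  have : L * Gt < x.+1 * Gt by nia.
  by rewrite ltn_mul2r G0.
have h4 : x < L + q.+1.
  have : x * Gt < (L + q.+1) * Gt by nia.
  by rewrite ltn_mul2r G0.
have h5 : L <= x := h3. by rewrite h5 h4 /= mul1n.
Qed.

Definition Pf p v g b t x := (x %% v != b) && ((x * g ^ t.+1) %% p %% v != b) &&
  all (fun j => (x * g ^ j) %% p %% v == b) (iota 1 t).

Lemma key p v g b x k T : 0 < g -> k <= T -> b < v ->
  ((x * g ^ k) %% p %% v == b) =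
  ((x %% v) * g ^ k == b + p * ((x * g ^ T %/ p) %/ g ^ (T - k)) %[mod v]).
Proof.
move=> g0 kT bv.
have eT : x * g ^ T = x * g ^ k * g ^ (T - k) by rewrite -mulnA -expnD subnKC.
have eD : (x * g ^ T %/ p) %/ g ^ (T - k) = (x * g ^ k) %/ p.
  by rewrite eT -divnMA divnMr // expn_gt0 g0.
rewrite eD modnMml.
set y := x * g ^ k.
have e1 : (y %% p %% v == b) = (y %% p == b %[mod v]) by rewrite (modn_small bv).
rewrite e1 -(eqn_modDr (p * (y %/ p)) (y %% p)).
by rewrite [y %% p + _]addnC [p * _]mulnC -divn_eq.
Qed.

Lemma Pf_Q p v g b t x : 0 < g -> b < v ->
  Pf p v g b t x = Q p v g b t (x * g ^ t.+1 %/ p) (x %% v).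
Proof.
move=> g0 bv; rewrite /Pf /Q -andbA -andbA; congr (_ && _).
rewrite andbC; congr (_ && _).
  rewrite /ch; apply: eq_in_all => j; rewrite mem_iota => /andP [j1 jt].
  rewrite (@key p v g b x j t.+1 g0) //; last by lia.
  have e : t.+1 - j = (t - j).+1 by lia.
  by rewrite e (expnS g (t - j)) divnMA.
by rewrite (@key p v g b x t.+1 t.+1 g0 (leqnn _) bv) (subnn t.+1) (expn0 g) divn1.
Qed.

Lemma pick_sum n k (F : nat -> nat) : k < n ->
  \sum_(0 <= i < n) (k == i) * F i = F k.
Proof.
move=> kn; rewrite (big_cat_nat (n := k) (leq0n k) (ltnW kn)) /= [X in _ + X]big_ltn // eqxx mul1n.
rewrite big1_seq; last first.
  by move=> i /andP [_]; rewrite mem_index_iota => /andP [_ ik]; rewrite gtn_eqF.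
rewrite [X in _ + (_ + X)]big1_seq ?add0n ?addn0 //.
by move=> i /andP [_]; rewrite mem_index_iota => /andP [ki _]; rewrite ltn_eqF.
Qed.

Lemma decomp p v g b t : 0 < p -> 0 < g -> 0 < v -> b < v ->
  \sum_(0 <= x < p) (Pf p v g b t x : nat) =
  \sum_(0 <= C < g ^ t.+1) \sum_(0 <= a < v)
     Q p v g b t C a * \sum_(0 <= x < p) ((x * g ^ t.+1 %/ p == C) && (x %% v == a) : nat).
Proof.
move=> p0 g0 v0 bv.
have step : forall x, x < p -> (Pf p v g b t x : nat) =
  \sum_(0 <= C < g ^ t.+1) \sum_(0 <= a < v)
     ((x * g ^ t.+1 %/ p == C) && (x %% v == a) : nat) * Q p v g b t C a.
  move=> x xp; rewrite (@Pf_Q p v g b t x g0 bv).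
  have xC : x * g ^ t.+1 %/ p < g ^ t.+1 by rewrite ltn_divLR // mulnC ltn_mul2l xp andbT expn_gt0 g0.
  have xa : x %% v < v by rewrite ltn_pmod.
  rewrite -(@pick_sum _ _ (fun C => Q p v g b t C (x %% v)) xC).
  apply: eq_big_nat => C _.
  rewrite -(@pick_sum _ _ (fun a => Q p v g b t C a) xa) big_distrr /=.
  apply: eq_big_nat => a _.
  by case: ((x * g ^ t.+1) %/ p == C); case: (x %% v == a); rewrite ?mul0n ?mul1n.
rewrite (eq_big_nat _ _ (fun x hx => step x (proj2 (andP hx)))).
rewrite exchange_big_nat /=; apply: eq_big_nat => C _.
rewrite exchange_big_nat /=; apply: eq_big_nat => a _.
rewrite big_distrr /=; apply: eq_big_nat => x _.
by rewrite mulnC.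
Qed.

Lemma forall_iota t (F : nat -> bool) :
  [forall j : 'I_t.+1, (0 < j) ==> F j] = all F (iota 1 t).
Proof.
apply/forallP/allP.
  move=> H j; rewrite mem_iota => /andP [j1 jt].
  have := H (Ordinal (_ : j < t.+1)); rewrite /= j1; apply; lia.
move=> H j; apply/implyP => j0; apply: H; rewrite mem_iota j0 /=.
have := ltn_ord j; lia.
Qed.

Lemma rho_Pf p v g b t : prime p -> 2 <= g <= p.-1 -> is_prim_root p g -> 0 < t -> b < v ->
  rho p v g b t = \sum_(0 <= x < p) (Pf p v g b t x : nat).
Proof.
move=> pp /andP [g2 gp] [_ prim] t0 bv.
have p0 : 0 < p by apply: prime_gt0.
have p1 : 1 < p by apply: prime_gt1.
have g0 : 0 < g by lia.
have cpg : coprime p g.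
  rewrite prime_coprime //; apply/negP => /(dvdn_leq g0); lia.
have nz : forall i, g ^ i %% p != 0.
  move=> i; have := coprimeXr i cpg; by rewrite prime_coprime.
have inj : forall i j, 0 < i -> i < j -> j < p -> g ^ i %% p != g ^ j %% p.
  move=> i j i0 ij jp; apply/negP => /eqP e.
  have : g ^ i * g ^ (j - i) == g ^ i * 1 %[mod p].
    by rewrite -expnD subnKC ?(ltnW ij) // muln1 e.
  rewrite mod_cancel; last by rewrite coprimeXr.
  apply/negP; apply: prim; lia.
pose hf n := if n == 0 then 0 else g ^ n %% p.
have hlt : forall i : 'I_p, hf i < p.
  by move=> i; rewrite /hf; case: (_ == 0) => //; rewrite ltn_pmod.
pose h (i : 'I_p) : 'I_p := Ordinal (hlt i).
have hinj : injective h.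
  move=> i j /(congr1 val) /=; rewrite /hf.
  have ip := ltn_ord i; have jp := ltn_ord j.
  case: (eqVneq (val i) 0) => i0; case: (eqVneq (val j) 0) => j0.
  - by move=> _; apply: val_inj; rewrite i0 j0.
  - by move=> e; move: (nz j); rewrite -e eqxx.
  - by move=> e; move: (nz i); rewrite e eqxx.
  move=> e; apply: val_inj.
  have i0' : 0 < val i by rewrite lt0n.
  have j0' : 0 < val j by rewrite lt0n.
  case: (ltngtP (val i) (val j)) => [lt|lt|//].
  - by move: (inj _ _ i0' lt jp); rewrite e eqxx.
  - by move: (inj _ _ j0' lt ip); rewrite e eqxx.
have Pf0 : Pf p v g b t 0 = false.
  rewrite /Pf mod0n; case: t t0 => // t' _ /=.
  by rewrite mul0n mod0n mod0n; case: (0 == b).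
rewrite /rho -sum1dep_card big_mkcond /=.
have e1 : forall i : 'I_p,
  (if (0 < i) && (g ^ i %% p %% v != b) && (g ^ (i + t.+1) %% p %% v != b) &&
      [forall j : 'I_t.+1, (0 < j) ==> (g ^ (i + j) %% p %% v == b)] then 1 else 0)
  = ((0 < h i) && Pf p v g b t (h i) : nat).
  move=> i; rewrite /= /hf /Pf.
  case: (eqVneq (val i) 0) => i0; first by rewrite i0.
  have -> : 0 < g ^ i %% p by rewrite lt0n nz.
  rewrite lt0n i0 /= (forall_iota t (fun j => g ^ (i + j) %% p %% v == b)).
  rewrite (expnD g i t.+1) -(modnMml (g ^ i) (g ^ t.+1)).
  rewrite (@eq_in_all _ (fun j => g ^ i %% p * g ^ j %% p %% v == b) (fun j => g ^ (i + j) %% p %% v == b)).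
    by case: ifP.
  by move=> j _; rewrite modnMml expnD.
rewrite (eq_bigr _ (fun i _ => e1 i)).
rewrite -(@reindex_inj _ _ _ _ h xpredT (fun x : 'I_p => ((0 < x) && Pf p v g b t x : nat)) hinj) /=.
rewrite -(big_mkord xpredT (fun x => ((0 < x) && Pf p v g b t x : nat))).
apply: eq_big_nat => x _.
by case: x => //=; rewrite Pf0.
Qed.

Lemma leq_expl m n e : m <= n -> m ^ e <= n ^ e.
Proof. by move=> mn; elim: e => // e IH; rewrite !expnS leq_mul. Qed.

Lemma A1 g v : 0 < v -> (v.-1 * g) %/ v + (g + v.-1) %/ v <= g.
Proof.
move=> v0.
have h1 := divn_eq (v.-1 * g) v; have h2 := divn_eq (g + v.-1) v.
have r1 := ltn_pmod (v.-1 * g) v0; have r2 := ltn_pmod (g + v.-1) v0.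
move: ((v.-1 * g) %/ v) ((v.-1 * g) %% v) ((g + v.-1) %/ v) ((g + v.-1) %% v) h1 h2 r1 r2.
move=> q1 s1 q2 s2 h1 h2 r1 r2.
have e : v.-1 * g + g = g * v by case: v v0 {h1 h2 r1 r2} => // v _; rewrite /= mulnSr; ring.
rewrite -ltnS -(ltn_pmul2r v0) mulSnr mulnDl; lia.
Qed.

Lemma A2 g v : 0 < v -> g <= g %/ v + (v.-1 * g + v.-1) %/ v.
Proof.
move=> v0.
have h1 := divn_eq g v; have h2 := divn_eq (v.-1 * g + v.-1) v.
have r1 := ltn_pmod g v0; have r2 := ltn_pmod (v.-1 * g + v.-1) v0.
move: (g %/ v) (g %% v) ((v.-1 * g + v.-1) %/ v) ((v.-1 * g + v.-1) %% v) h1 h2 r1 r2.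
move=> q1 s1 q2 s2 h1 h2 r1 r2.
have e : v.-1 * g + g = g * v by case: v v0 {h1 h2 r1 r2} => // v _; rewrite /= mulnSr; ring.
rewrite -ltnS -(ltn_pmul2r v0) mulSnr mulnDl; lia.
Qed.

Lemma sum_neq v b : b < v -> \sum_(0 <= a < v) (a != b : nat) = v.-1.
Proof.
move=> bv.
have h := @pick_sum v b (fun _ => 1) bv.
have s : \sum_(0 <= a < v) ((a != b : nat) + (b == a) * 1) = v.
  rewrite (eq_bigr (fun _ => 1)); first by rewrite sum_nat_const_nat subn0 muln1.
  by move=> a _; rewrite muln1 [b == a]eq_sym; case: (a == b).
rewrite big_split /= h in s; lia.
Qed.

Lemma E_pow p v g b t a : 0 < g -> 0 < t ->
  E p v g b t a = E p v g b 1 a * (\sum_(0 <= c < g) (g * b == b + p * c %[mod v] : nat)) ^ t.-1.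
Proof.
move=> g0; elim: t => // n IH _.
case: n IH => [|n] IH; first by rewrite expn0 muln1.
by rewrite E_rec // IH // expnS /=; ring.
Qed.

Lemma sum_not g (P : nat -> bool) :
  \sum_(0 <= c < g) (~~ P c : nat) = g - \sum_(0 <= c < g) (P c : nat).
Proof.
have s : \sum_(0 <= c < g) ((~~ P c : nat) + P c) = g.
  rewrite (eq_bigr (fun _ => 1)); first by rewrite sum_nat_const_nat subn0 muln1.
  by move=> c _; case: (P c).
rewrite big_split /= in s; lia.
Qed.

Theorem corollary9 (p v g t b q r : nat) :
  prime p -> odd p ->
  1 < v -> v < p.-1 ->
  2 <= g <= p.-1 -> is_prim_root p g ->
  1 <= t -> b < v ->
  p = q * g ^ t.+1 + r -> r < g ^ t.+1 ->
  (v.-1 * (g %/ v) ^ t * ((v.-1 * g) %/ v) * (q %/ v) <= rho p v g b t)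
  /\
  (rho p v g b t <= v.-1 * (ceildiv g v) ^ t * ceildiv (v.-1 * g) v * ceildiv q.+1 v).
Proof.
move=> pp podd v1 vp hg prim t1 bv pE rG.
have p0 : 0 < p by apply: prime_gt0.
have g0 : 0 < g by case/andP: hg => h _; lia.
have v0 : 0 < v by lia.
have cvp : coprime v p.
  rewrite coprime_sym prime_coprime //; apply/negP => /(dvdn_leq v0); lia.
have G0 : 0 < g ^ t.+1 by rewrite expn_gt0 g0.
rewrite /ceildiv (@rho_Pf p v g b t pp hg prim t1 bv) (@decomp p v g b t p0 g0 v0 bv).
set K := \sum_(0 <= c < g) (g * b == b + p * c %[mod v] : nat).
set K' := \sum_(0 <= c < g) (~~ (g * b == b + p * c %[mod v]) : nat).
set fl := g %/ v. set ce := (g + v.-1) %/ v.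
set fl' := (v.-1 * g) %/ v. set ce' := (v.-1 * g + v.-1) %/ v.
set S := \sum_(0 <= a < v) \sum_(0 <= C < g ^ t.+1) (Q p v g b t C a : nat).
have hK : fl <= K <= ce by apply: aff_count.
have hK' : K' = g - K by rewrite /K' sum_not.
have hA1 := @A1 g v v0; have hA2 := @A2 g v v0.
have hK'b : fl' <= K' <= ce' by rewrite hK'; lia.
have hE : forall a, fl ^ t <= E p v g b t a <= ce ^ t.
  move=> a; rewrite (@E_pow p v g b t a g0 t1) E1.
  have hE1 : fl <= \sum_(0 <= c < g) (a * g == b + p * c %[mod v] : nat) <= ce by apply: aff_count.
  case/andP: hE1 => e1 e2; case/andP: hK => k1 k2.
  have -> : t = t.-1.+1 by lia.
  rewrite !expnS /=; apply/andP; split; apply: leq_mul => //; exact: leq_expl.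
have hS : S = \sum_(0 <= a < v) (a != b) * E p v g b t a * K'.
  by apply: eq_big_nat => a _; rewrite sumQ.
have Sd : forall k, \sum_(0 <= C < g ^ t.+1) \sum_(0 <= a < v) Q p v g b t C a * k = S * k.
  move=> k; rewrite /S big_distrl exchange_big_nat /=; apply: eq_big_nat => a _.
  by rewrite big_distrl.
have hSb : v.-1 * (fl ^ t * fl') <= S <= v.-1 * (ce ^ t * ce').
  rewrite hS -(@sum_neq v b bv) !big_distrl /=; apply/andP; split; apply: leq_sum_nat => a _;
    rewrite -mulnA leq_mul2l; case: (a != b) => //=; apply: leq_mul;
    by have := hE a; have := hK'b; lia.
have eA : forall x y z : nat, x * y ^ t * z = x * (y ^ t * z) by move=> *; rewrite mulnA.
rewrite !eA.
apply: conj.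
  apply: (@leq_trans (S * (q %/ v))).
    by rewrite leq_mul2r; case/andP: hSb => -> _; rewrite orbT.
  rewrite -Sd; apply: leq_sum_nat => C /andP [_ CG]; apply: leq_sum_nat => a /andP [_ av].
  rewrite leq_mul2l; have := @cnt_bounds p q r (g ^ t.+1) C a v v0 av G0 p0 CG pE rG.
  by case/andP => -> _; rewrite orbT.
apply: (@leq_trans (S * ((q.+1 + v.-1) %/ v))).
  rewrite -Sd; apply: leq_sum_nat => C /andP [_ CG]; apply: leq_sum_nat => a /andP [_ av].
  rewrite leq_mul2l; have := @cnt_bounds p q r (g ^ t.+1) C a v v0 av G0 p0 CG pE rG.
  by case/andP => _ ->; rewrite orbT.
by rewrite leq_mul2r; case/andP: hSb => _ ->; rewrite orbT.
Qed.
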